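(* For every $\delta\in\mathbb R$, $$\lim_{T\to\infty,\,T\in2\mathbb N}(Q_T)^{-1}(e^{-\delta})=(Q_\infty)^{-1}(e^{-\delta}\wedge1).$$
   Context: $(S_n)$ is the simple symmetric random walk on $\mathbb Z$ started at $0$ with law $\mathbf P$. For $T\in2\mathbb N\cup\{\infty\}$, $\tau^T_1:=\inf\{n>0:S_n\in\{-T,0,T\}\}$ (for $T=\infty$ the first return time to $0$) and $Q_T(\lambda):=\mathbf E[e^{-\lambda\tau^T_1}]$. For $T<\infty$, $Q_T$ is finite, analytic, strictly decreasing on $(\lambda_0^T,\infty)$, $\lambda_0^T:=-\frac12\log(1+\tan^2(\pi/T))<0$, with $Q_T(\lambda)\to\infty$ as $\lambda\downarrow\lambda_0^T$ and $\to0$ as $\lambda\to\infty$; $(Q_T)^{-1}:(0,\infty)\to(\lambda^T_0,\infty)$ is its inverse. $Q_\infty(\lambda)=1-\sqrt{1-e^{-2\lambda}}$ for $\lambda\ge0$ (and $+\infty$ for $\lambda<0$), with inverse $(Q_\infty)^{-1}:(0,1]\to[0,\infty)$. *)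

(* Defs.v *)
From Stdlib Require Import Reals Lra ZArith List ClassicalEpsilon.
Import ListNotations.
Open Scope R_scope.

Definition step (b : bool) : Z := if b then 1%Z else (-1)%Z.

Fixpoint all_paths (n : nat) : list (list bool) :=
  match n with
  | O => [nil]
  | S m => map (cons true) (all_paths m) ++ map (cons false) (all_paths m)
  end.

Definition pos (p : list bool) (j : nat) : Z :=
  fold_right Z.add 0%Z (map step (firstn j p)).

(* Target set: {-T,0,T} for T = Some T, {0} for T = None (T = infinity). *)
Definition hitb (T : option nat) (x : Z) : bool :=
  match T with
  | None => Z.eqb x 0
  | Some t => Z.eqb x 0 || Z.eqb x (Z.of_nat t) || Z.eqb x (- Z.of_nat t)
  end.

(* tau^T_1 = length p on the path p (first n > 0 with S_n in the target set). *)
Definition first_hit (T : option nat) (p : list bool) : bool :=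
  Nat.ltb 0 (length p) && hitb T (pos p (length p))
  && forallb (fun j => negb (hitb T (pos p j))) (seq 1 (length p - 1)).

Definition tau_prob (T : option nat) (n : nat) : R :=
  INR (length (filter (first_hit T) (all_paths n))) / 2 ^ n.

(* n-th term of E[exp(-lambda tau^T_1)] = sum_n P(tau = n) e^{-lambda n}. *)
Definition Q_term (T : option nat) (lam : R) (n : nat) : R :=
  tau_prob T n * exp (- lam * INR n).

Definition Q_eq (T : option nat) (lam y : R) : Prop :=
  infinite_sum (Q_term T lam) y.

(* (Q_T)^{-1}(y): the (unique, by strict monotonicity) lambda with Q_T(lambda) = y. *)
Definition Qinv (T : option nat) (y : R) : R :=
  epsilon (inhabits 0) (fun lam => Q_eq T lam y).

(* Main.v *)
Require Import Defs.
From Stdlib Require Import Reals Lra Lia List ZArith ClassicalEpsilon.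
Import ListNotations.
Open Scope R_scope.

Lemma forallb_eq {A} (f g : A -> bool) l : (forall x, f x = g x) -> forallb f l = forallb g l.
Proof. intros H; induction l; simpl; auto. rewrite H, IHl; auto. Qed.

Lemma forallb_map' {A B} (f : B -> bool) (g : A -> B) l : forallb f (map g l) = forallb (fun x => f (g x)) l.
Proof. induction l; simpl; auto. rewrite IHl; auto. Qed.

Lemma pos_0 p : Defs.pos p 0 = 0%Z.
Proof. reflexivity. Qed.

Lemma pos_cons b p j : Defs.pos (b :: p) (S j) = (step b + Defs.pos p j)%Z.
Proof. reflexivity. Qed.

Definition fh (h : Z -> bool) (x : Z) (p : list bool) : bool :=
  Nat.ltb 0 (length p) && h (x + Defs.pos p (length p))%Z
  && forallb (fun j => negb (h (x + Defs.pos p j)%Z)) (seq 1 (length p - 1)).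

Definition nilb (p : list bool) : bool := match p with [] => true | _ => false end.

Lemma fh_cons h x b p :
  fh h x (b :: p) = if h (x + step b)%Z then nilb p else fh h (x + step b)%Z p.
Proof.
  unfold fh. simpl length. replace (S (length p) - 1)%nat with (length p) by lia.
  rewrite pos_cons.
  destruct p as [|c p'].
  - simpl. rewrite Z.add_0_r. destruct (h (x + step b)%Z); reflexivity.
  - remember (c :: p') as p. assert (Hl : length p = S (length p')) by (subst; reflexivity).
    rewrite Hl. simpl seq. simpl forallb. rewrite pos_cons, pos_0, Z.add_0_r.
    rewrite <- seq_shift, forallb_map'.
    rewrite (forallb_eq (fun x0 => negb (h (x + Defs.pos (b :: p) (S x0))%Z))
               (fun j => negb (h (x + step b + Defs.pos p j)%Z))).
    2:{ intros j. rewrite pos_cons, Z.add_assoc. reflexivity. }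
    replace (S (length p') - 1)%nat with (length p') by lia.
    rewrite Z.add_assoc. simpl.
    destruct (h (x + step b)%Z); simpl.
    + subst p; simpl. destruct (h _); reflexivity.
    + rewrite Nat.sub_0_r. reflexivity.
Qed.

Lemma first_hit_fh T p : first_hit T p = fh (hitb T) 0 p.
Proof.
  unfold first_hit, fh. f_equal.
Qed.

Fixpoint Nn (h : Z -> bool) (n : nat) (x : Z) : nat :=
  match n with
  | O => O
  | S m => ((if h (x + step true)%Z then (match m with O => 1 | _ => 0 end) else Nn h m (x + step true)%Z)
           + (if h (x + step false)%Z then (match m with O => 1 | _ => 0 end) else Nn h m (x + step false)%Z))%nat
  end.

Fixpoint Dn (h : Z -> bool) (n : nat) (x : Z) : nat :=
  match n with
  | O => 1%nat
  | S m => ((if h (x + step true)%Z then O else Dn h m (x + step true)%Z)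
           + (if h (x + step false)%Z then O else Dn h m (x + step false)%Z))%nat
  end.

Lemma filter_map_sw {A B} (f : B -> bool) (g : A -> B) l :
  filter f (map g l) = map g (filter (fun x => f (g x)) l).
Proof. induction l; simpl; auto. destruct (f (g a)); simpl; rewrite IHl; auto. Qed.

Lemma cnt_S (f : list bool -> bool) n :
  length (filter f (all_paths (S n))) =
  (length (filter (fun p => f (true :: p)) (all_paths n))
   + length (filter (fun p => f (false :: p)) (all_paths n)))%nat.
Proof. simpl. rewrite filter_app, length_app, !filter_map_sw, !length_map. reflexivity. Qed.

Lemma filter_ext' {A} (f g : A -> bool) l : (forall x, f x = g x) -> filter f l = filter g l.
Proof. intros H; induction l; simpl; auto. rewrite H, IHl; auto. Qed.

Lemma cnt_false {A} (l : list A) : length (filter (fun _ => false) l) = O.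
Proof. induction l; simpl; auto. Qed.

Lemma cnt_nil n : length (filter nilb (all_paths n)) = match n with O => 1%nat | _ => O end.
Proof.
  destruct n; [reflexivity|]. rewrite cnt_S. simpl. rewrite !cnt_false. reflexivity.
Qed.

Lemma cnt_fh h n x : length (filter (fh h x) (all_paths n)) = Nn h n x.
Proof.
  revert x; induction n; intros x.
  - reflexivity.
  - rewrite cnt_S. simpl Nn.
    assert (E : forall b, length (filter (fun p => fh h x (b :: p)) (all_paths n)) =
       if h (x + step b)%Z then (match n with O => 1%nat | _ => O end) else Nn h n (x + step b)%Z).
    { intros b. rewrite (filter_ext' _ (fun p => if h (x + step b)%Z then nilb p else fh h (x + step b)%Z p))
        by (intros; apply fh_cons).
      destruct (h (x + step b)%Z).
      - rewrite (filter_ext' _ nilb) by (intros; reflexivity). apply cnt_nil.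
      - rewrite (filter_ext' _ (fh h (x + step b)%Z)) by (intros; reflexivity). apply IHn. }
    rewrite !E. reflexivity.
Qed.

Lemma tau_prob_N T n : tau_prob T n = INR (Nn (hitb T) n 0) / 2 ^ n.
Proof.
  unfold tau_prob. rewrite (filter_ext' _ (fh (hitb T) 0)) by (intros; apply first_hit_fh).
  rewrite cnt_fh. reflexivity.
Qed.

Lemma Nn_SS h n x : Nn h (S (S n)) x =
  ((if h (x + step true)%Z then O else Nn h (S n) (x + step true)%Z)
 + (if h (x + step false)%Z then O else Nn h (S n) (x + step false)%Z))%nat.
Proof. reflexivity. Qed.

Lemma Dn_S h n x : Dn h (S n) x =
  ((if h (x + step true)%Z then O else Dn h n (x + step true)%Z)
 + (if h (x + step false)%Z then O else Dn h n (x + step false)%Z))%nat.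
Proof. reflexivity. Qed.

Lemma ND h n x : (Nn h (S n) x + Dn h (S n) x = 2 * Dn h n x)%nat.
Proof.
  revert x; induction n; intros x.
  - simpl. destruct (h (x+1)%Z), (h (x + -1)%Z); simpl; lia.
  - rewrite Nn_SS, (Dn_S h (S n) x), (Dn_S h n x).
    pose proof (IHn (x + step true)%Z). pose proof (IHn (x + step false)%Z).
    destruct (h (x + step true)%Z), (h (x + step false)%Z); lia.
Qed.

Lemma Rdiv_le_0_compat a b : 0 <= a -> 0 < b -> 0 <= a / b.
Proof. intros; unfold Rdiv; apply Rmult_le_pos; auto; left; apply Rinv_0_lt_compat; auto. Qed.

Lemma hitb_sym T z : hitb T (- z)%Z = hitb T z.
Proof.
  destruct T as [t|]; simpl.
  - destruct (Z.eqb_spec (-z) 0), (Z.eqb_spec z 0), (Z.eqb_spec (-z) (Z.of_nat t)), (Z.eqb_spec z (Z.of_nat t)),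
      (Z.eqb_spec (-z) (- Z.of_nat t)), (Z.eqb_spec z (- Z.of_nat t)); simpl; auto; lia.
  - destruct (Z.eqb_spec (-z) 0), (Z.eqb_spec z 0); auto; lia.
Qed.

Lemma Dn_sym h (Hs : forall z, h (- z)%Z = h z) n x : Dn h n (- x) = Dn h n x.
Proof.
  revert x; induction n; intros x; [reflexivity|].
  rewrite !Dn_S. simpl step.
  replace (- x + 1)%Z with (- (x + -1))%Z by lia.
  replace (- x + -1)%Z with (- (x + 1))%Z by lia.
  rewrite !Hs, !IHn. lia.
Qed.

Lemma Dn_le h n x : (Dn h n x <= 2 ^ n)%nat.
Proof.
  revert x; induction n; intros x; simpl; [lia|].
  pose proof (IHn (x+1)%Z); pose proof (IHn (x + -1)%Z).
  destruct (h (x+1)%Z), (h (x + -1)%Z); lia.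
Qed.

Lemma Dn_mono (h1 h2 : Z -> bool) (Hm : forall z, h1 z = true -> h2 z = true) n x :
  (Dn h2 n x <= Dn h1 n x)%nat.
Proof.
  revert x; induction n; intros x; [simpl; lia|].
  rewrite !Dn_S.
  pose proof (IHn (x + step true)%Z); pose proof (IHn (x + step false)%Z).
  pose proof (Hm (x + step true)%Z); pose proof (Hm (x + step false)%Z).
  destruct (h1 (x + step true)%Z), (h1 (x + step false)%Z), (h2 (x + step true)%Z), (h2 (x + step false)%Z);
   try lia; exfalso; intuition congruence.
Qed.

Definition good (h : Z -> bool) := h 0%Z = true /\ h 1%Z = false /\ forall z, h (- z)%Z = h z.

Lemma good_T T : (2 <= T)%nat -> good (hitb (Some T)).
Proof.
  intros HT. split; [reflexivity|]. split; [|apply hitb_sym].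
  unfold hitb. rewrite (proj2 (Z.eqb_neq 1 (Z.of_nat T))) by lia.
  rewrite (proj2 (Z.eqb_neq 1 (- Z.of_nat T))) by lia. reflexivity.
Qed.

Lemma good_I : good (hitb None).
Proof. split; [reflexivity|]. split; [reflexivity|apply hitb_sym]. Qed.

Lemma Dn_S0 h (G : good h) n : Dn h (S n) 0 = (2 * Dn h n 1)%nat.
Proof.
  destruct G as [H0 [H1 Hs]].
  rewrite Dn_S. simpl step. simpl Z.add.
  assert (Hm : h (-1)%Z = false) by (rewrite <- H1, <- (Hs 1%Z); reflexivity).
  rewrite H1, Hm. replace (Dn h n (-1)%Z) with (Dn h n 1) by (rewrite <- (Dn_sym h Hs n 1); reflexivity). lia.
Qed.

Lemma Nn2 h (G : good h) : (2 <= Nn h 2 0)%nat.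
Proof.
  destruct G as [H0 [H1 Hs]].
  assert (Hm : h (-1)%Z = false) by (rewrite <- H1, <- (Hs 1%Z); reflexivity).
  simpl. rewrite H1, Hm. simpl. 
  assert (Hm2 : h (-1 + -1)%Z = h 2%Z) by (rewrite <- (Hs 2%Z); reflexivity).
  replace (-1 + 1)%Z with 0%Z by reflexivity. rewrite H0.
  destruct (h 2%Z), (h (-1 + -1)%Z); simpl; lia.
Qed.

Definition qq h n := INR (Dn h n 0) / 2 ^ n.
Definition aa h n := INR (Nn h n 0) / 2 ^ n.

Lemma aa_0 h : aa h 0 = 0.
Proof. unfold aa. simpl. lra. Qed.

Lemma qq_0 h : qq h 0 = 1.
Proof. unfold qq. simpl. lra. Qed.

Lemma aa_S h n : aa h (S n) = qq h n - qq h (S n).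
Proof.
  unfold aa, qq. pose proof (ND h n 0%Z) as E.
  apply (f_equal INR) in E. rewrite plus_INR, mult_INR in E. simpl (INR 2) in E.
  simpl pow. assert (0 < 2 ^ n) by (apply pow_lt; lra).
  assert (E' : INR (Nn h (S n) 0) = 2 * INR (Dn h n 0) - INR (Dn h (S n) 0)) by lra.
  rewrite E'. field. lra.
Qed.

Lemma aa_nonneg h n : 0 <= aa h n.
Proof. unfold aa. apply Rdiv_le_0_compat. apply pos_INR. apply pow_lt; lra. Qed.

Lemma aa_2 h (G : good h) : 1/2 <= aa h 2.
Proof.
  unfold aa. pose proof (Nn2 h G). apply le_INR in H. simpl in *. lra.
Qed.

Lemma qq_S h (G : good h) n : qq h (S n) = INR (Dn h n 1) / 2 ^ n.
Proof.
  unfold qq. rewrite Dn_S0 by auto. rewrite mult_INR. simpl. field. apply pow_nonzero. lra.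
Qed.

Lemma qq_bounds h n : 0 <= qq h n <= 1.
Proof.
  unfold qq. pose proof (Dn_le h n 0). apply le_INR in H. rewrite pow_INR in H.
  replace (INR 2) with 2 in H by (simpl; lra). assert (0 < 2 ^ n) by (apply pow_lt; lra). split.
  - apply Rdiv_le_0_compat; [apply pos_INR|lra].
  - apply Rmult_le_reg_r with (2 ^ n); [lra|]. unfold Rdiv. rewrite Rmult_assoc, Rinv_l; lra.
Qed.

Lemma qq_mono h1 h2 (Hm : forall z, h1 z = true -> h2 z = true) n : qq h2 n <= qq h1 n.
Proof.
  unfold qq. pose proof (Dn_mono h1 h2 Hm n 0). apply le_INR in H.
  assert (0 < 2 ^ n) by (apply pow_lt; lra). unfold Rdiv. apply Rmult_le_compat_r; auto.
  left; apply Rinv_0_lt_compat; auto.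
Qed.

Section Int.
Variable T : nat.
Hypothesis HT : (2 <= T)%nat.

Let hT := hitb (Some T).

Lemma hT_up x : (0 < x < Z.of_nat T)%Z -> hT (x + step true)%Z = Z.eqb (x + 1) (Z.of_nat T).
Proof.
  intros Hx. unfold hT, hitb. simpl step.
  rewrite (proj2 (Z.eqb_neq (x+1) 0)) by lia.
  rewrite (proj2 (Z.eqb_neq (x+1) (- Z.of_nat T))) by lia. simpl.
  destruct (Z.eqb (x+1) (Z.of_nat T)); reflexivity.
Qed.

Lemma hT_dn x : (0 < x < Z.of_nat T)%Z -> hT (x + step false)%Z = Z.eqb (x + -1) 0.
Proof.
  intros Hx. unfold hT, hitb. simpl step.
  rewrite (proj2 (Z.eqb_neq (x + -1) (Z.of_nat T))) by lia.
  rewrite (proj2 (Z.eqb_neq (x + -1) (- Z.of_nat T))) by lia.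
  destruct (Z.eqb (x + -1) 0); reflexivity.
Qed.

Definition vv (x : Z) := sin (PI * IZR x / INR T).
Definition cT := cos (PI / INR T).
Definition sT := sin (PI / INR T).

Lemma INRT_pos : 0 < INR T.
Proof. apply lt_0_INR. lia. Qed.

Lemma vv_rec x : vv (x + 1) + vv (x + -1) = 2 * cT * vv x.
Proof.
  unfold vv, cT. pose proof INRT_pos.
  rewrite !plus_IZR.
  replace (PI * (IZR x + 1) / INR T) with (PI * IZR x / INR T + PI / INR T) by (field; lra).
  replace (PI * (IZR x + IZR (-1)) / INR T) with (PI * IZR x / INR T - PI / INR T)
    by (replace (IZR (-1)) with (-1) by reflexivity; field; lra).
  rewrite sin_plus, sin_minus. ring.
Qed.

Lemma vv_T : vv (Z.of_nat T) = 0.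
Proof.
  unfold vv. rewrite <- INR_IZR_INZ. pose proof INRT_pos.
  replace (PI * INR T / INR T) with PI by (field; lra). apply sin_PI.
Qed.

Lemma vv_0 : vv 0 = 0.
Proof. unfold vv. replace (PI * IZR 0 / INR T) with 0 by (simpl; field; pose proof INRT_pos; lra). apply sin_0. Qed.

Lemma vv_le1 x : vv x <= 1.
Proof. unfold vv. apply SIN_bound. Qed.

Lemma sT_le_vv x : (0 < x < Z.of_nat T)%Z -> sT <= vv x.
Proof.
  intros Hx. unfold sT, vv. pose proof INRT_pos. pose proof PI_RGT_0.
  assert (H1 : 1 <= IZR x) by (apply IZR_le; lia).
  assert (H2 : IZR x <= INR T - 1).
  { rewrite INR_IZR_INZ. replace 1 with (IZR 1) by reflexivity. rewrite <- minus_IZR. apply IZR_le; lia. }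
  assert (Hd : forall X, 1 <= X -> X <= INR T / 2 -> sin (PI / INR T) <= sin (PI * X / INR T)).
  { intros X HX1 HX2. apply sin_incr_1.
    - assert (0 < PI / INR T) by (apply Rdiv_lt_0_compat; lra). lra.
    - apply Rmult_le_reg_r with (INR T); [lra|]. field_simplify; [|lra]. nra.
    - assert (0 < PI * X / INR T) by (apply Rdiv_lt_0_compat; nra). lra.
    - apply Rmult_le_reg_r with (INR T); [lra|]. field_simplify; [|lra]. nra.
    - apply Rmult_le_reg_r with (INR T); [lra|]. field_simplify; [|lra|lra]. nra. }
  destruct (Rle_dec (IZR x) (INR T / 2)).
  - apply Hd; lra.
  - rewrite <- (sin_PI_x (PI * IZR x / INR T)).
    replace (PI - PI * IZR x / INR T) with (PI * (INR T - IZR x) / INR T) by (field; lra).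
    apply Hd; lra.
Qed.

Lemma D_lower n x : (0 < x < Z.of_nat T)%Z -> (2 * cT) ^ n * vv x <= INR (Dn hT n x).
Proof.
  revert x; induction n; intros x Hx.
  - simpl. pose proof (vv_le1 x). lra.
  - rewrite Dn_S, plus_INR, hT_up, hT_dn by auto.
    assert (A : (2 * cT) ^ n * vv (x + 1) <= INR (if (x + 1 =? Z.of_nat T)%Z then O else Dn hT n (x + step true))).
    { destruct (Z.eqb_spec (x+1) (Z.of_nat T)) as [E|E].
      all: first [simpl step; apply IHn; lia | rewrite E, vv_T, Rmult_0_r; simpl; lra]. }
    assert (B : (2 * cT) ^ n * vv (x + -1) <= INR (if (x + -1 =? 0)%Z then O else Dn hT n (x + step false))).
    { destruct (Z.eqb_spec (x + -1) 0) as [E|E].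
      all: first [simpl step; apply IHn; lia | rewrite E, vv_0, ?Rmult_0_r; simpl; lra]. }
    replace ((2 * cT) ^ S n * vv x) with ((2 * cT) ^ n * (vv (x + 1) + vv (x + -1)))
      by (rewrite vv_rec; simpl; ring).
    lra.
Qed.

Lemma D_upper n x : (0 < x < Z.of_nat T)%Z -> sT * INR (Dn hT n x) <= (2 * cT) ^ n * vv x.
Proof.
  revert x; induction n; intros x Hx.
  - simpl. pose proof (sT_le_vv x Hx). lra.
  - rewrite Dn_S, plus_INR, hT_up, hT_dn by auto.
    assert (A : sT * INR (if (x + 1 =? Z.of_nat T)%Z then O else Dn hT n (x + step true)) <= (2 * cT) ^ n * vv (x + 1)).
    { destruct (Z.eqb_spec (x+1) (Z.of_nat T)) as [E|E].
      all: first [simpl step; apply IHn; lia | rewrite E, vv_T, ?Rmult_0_r; simpl; lra]. }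
    assert (B : sT * INR (if (x + -1 =? 0)%Z then O else Dn hT n (x + step false)) <= (2 * cT) ^ n * vv (x + -1)).
    { destruct (Z.eqb_spec (x + -1) 0) as [E|E].
      all: first [simpl step; apply IHn; lia | rewrite E, vv_0, ?Rmult_0_r; simpl; lra]. }
    replace ((2 * cT) ^ S n * vv x) with ((2 * cT) ^ n * (vv (x + 1) + vv (x + -1)))
      by (rewrite vv_rec; simpl; ring).
    lra.
Qed.

Lemma sT_pos : 0 < sT.
Proof.
  unfold sT. pose proof INRT_pos. pose proof PI_RGT_0. apply sin_gt_0.
  - apply Rdiv_lt_0_compat; lra.
  - assert (1 < INR T) by (apply lt_1_INR; lia).
    apply Rmult_lt_reg_r with (INR T); [lra|]. field_simplify; [|lra]. nra.
Qed.

Lemma cT_range : 0 <= cT < 1.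
Proof.
  unfold cT. pose proof INRT_pos. pose proof PI_RGT_0.
  assert (2 <= INR T) by (replace 2 with (INR 2) by (simpl; lra); apply le_INR; lia).
  assert (0 < PI / INR T) by (apply Rdiv_lt_0_compat; lra).
  assert (PI / INR T <= PI / 2).
  { apply Rmult_le_reg_r with (INR T); [lra|]. field_simplify; [|lra]. nra. }
  split.
  - apply cos_ge_0; lra.
  - rewrite <- cos_0. apply cos_decreasing_1; lra.
Qed.

Lemma qT_lower n : sT * cT ^ n <= qq hT (S n).
Proof.
  unfold hT. rewrite qq_S by (apply good_T; auto).
  pose proof (D_lower n 1 ltac:(lia)). pose proof (sT_le_vv 1 ltac:(lia)).
  fold hT. assert (0 < 2 ^ n) by (apply pow_lt; lra).
  apply Rmult_le_reg_r with (2 ^ n); [lra|].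
  replace (INR (Dn hT n 1) / 2 ^ n * 2 ^ n) with (INR (Dn hT n 1)) by (field; lra).
  rewrite Rpow_mult_distr in H.
  pose proof cT_range. assert (0 <= cT ^ n) by (apply pow_le; lra).
  assert (0 <= 2 ^ n * cT ^ n) by (apply Rmult_le_pos; lra). nra.
Qed.

Lemma qT_upper n : qq hT (S n) <= cT ^ n.
Proof.
  unfold hT. rewrite qq_S by (apply good_T; auto).
  pose proof (D_upper n 1 ltac:(lia)). fold hT. pose proof sT_pos.
  assert (0 < 2 ^ n) by (apply pow_lt; lra).
  apply Rmult_le_reg_r with (2 ^ n); [lra|].
  replace (INR (Dn hT n 1) / 2 ^ n * 2 ^ n) with (INR (Dn hT n 1)) by (field; lra).
  rewrite Rpow_mult_distr in H.
  assert (vv 1 = sT) by (unfold vv, sT; f_equal; simpl; field; pose proof INRT_pos; lra).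
  rewrite H2 in H. 
  apply Rmult_le_reg_l with sT; [lra|]. nra.
Qed.

Lemma Dinf_upper n x : (0 < x < Z.of_nat T)%Z ->
  INR (Dn (hitb None) n x) <= INR (Dn hT n x) + 2 ^ n * IZR x / INR T.
Proof.
  pose proof INRT_pos.
  revert x; induction n; intros x Hx.
  - simpl. assert (0 < IZR x) by (apply IZR_lt; lia).
    assert (0 < 1 * IZR x / INR T) by (apply Rdiv_lt_0_compat; lra). lra.
  - rewrite !Dn_S, !plus_INR, hT_up, hT_dn by auto.
    assert (Hn : hitb None (x + step true)%Z = false).
    { simpl. apply Z.eqb_neq. lia. }
    rewrite Hn.
    assert (Hd : hitb None (x + step false)%Z = Z.eqb (x + -1) 0) by reflexivity. rewrite Hd.
    assert (A : INR (Dn (hitb None) n (x + step true)) <=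
                INR (if (x + 1 =? Z.of_nat T)%Z then O else Dn hT n (x + step true)) + 2 ^ n * IZR (x + 1) / INR T).
    { destruct (Z.eqb_spec (x+1) (Z.of_nat T)) as [E|E].
      - simpl step. rewrite E, <- INR_IZR_INZ. pose proof (Dn_le (hitb None) n (Z.of_nat T)).
        apply le_INR in H0. rewrite pow_INR in H0. replace (INR 2) with 2 in H0 by (simpl; lra).
        replace (2 ^ n * INR T / INR T) with (2 ^ n) by (field; lra). simpl. lra.
      - apply IHn. lia. }
    assert (B : INR (if (x + -1 =? 0)%Z then O else Dn (hitb None) n (x + step false)) <=
                INR (if (x + -1 =? 0)%Z then O else Dn hT n (x + step false)) + 2 ^ n * IZR (x + -1) / INR T).
    { destruct (Z.eqb_spec (x + -1) 0) as [E|E].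
      - rewrite E. simpl. lra.
      - apply IHn. lia. }
    rewrite plus_IZR in A, B. simpl pow.
    replace (2 * 2 ^ n * IZR x / INR T) with (2 ^ n * (IZR x + 1) / INR T + 2 ^ n * (IZR x + IZR (-1)) / INR T)
      by (replace (IZR (-1)) with (-1) by reflexivity; field; lra).
    lra.
Qed.

Lemma qinf_upper n : qq (hitb None) n <= qq hT n + 1 / INR T.
Proof.
  pose proof INRT_pos. destruct n.
  - rewrite !qq_0. assert (0 < 1 / INR T) by (apply Rdiv_lt_0_compat; lra). lra.
  - rewrite !qq_S by (apply good_I || (apply good_T; auto)).
    pose proof (Dinf_upper n 1 ltac:(lia)). fold hT.
    assert (0 < 2 ^ n) by (apply pow_lt; lra).
    apply Rmult_le_reg_r with (2 ^ n); [lra|].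
    replace ((INR (Dn hT n 1) / 2 ^ n + 1 / INR T) * 2 ^ n) with (INR (Dn hT n 1) + 2 ^ n * IZR 1 / INR T)
      by (simpl; field; lra).
    replace (INR (Dn (hitb None) n 1) / 2 ^ n * 2 ^ n) with (INR (Dn (hitb None) n 1)) by (field; lra).
    exact H0.
Qed.

Lemma qT_le_qinf n : qq hT n <= qq (hitb None) n.
Proof.
  apply qq_mono. intros z Hz. unfold hT, hitb in *. rewrite Hz. reflexivity.
Qed.

End Int.

Definition Sp (a : nat -> R) (s : R) (M : nat) := sum_f_R0 (fun n => a n * s ^ n) M.
Definition Wp (q : nat -> R) (s : R) (M : nat) := sum_f_R0 (fun n => q n * s ^ n) M.

Section Gen.
Variables (a q : nat -> R).
Hypothesis a0 : a 0%nat = 0.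
Hypothesis aS : forall n, a (S n) = q n - q (S n).
Hypothesis q0 : q 0%nat = 1.

Lemma Sp_id s M : Sp a s (S M) = 1 + (s - 1) * Wp q s M - q (S M) * s ^ (S M).
Proof.
  induction M.
  - unfold Sp, Wp. simpl. rewrite a0, aS, q0. ring.
  - unfold Sp, Wp in *. rewrite tech5, IHM, (tech5 _ M), aS. simpl. ring.
Qed.

Lemma Sp_1 M : Sp a 1 (S M) = 1 - q (S M).
Proof. rewrite Sp_id, pow1. ring. Qed.

Lemma Sp_0 M : Sp a 0 M = 0.
Proof.
  induction M; unfold Sp in *; simpl; [rewrite a0; ring|]. rewrite IHM. simpl. ring.
Qed.

Lemma cv_1 : Un_cv q 0 -> Un_cv (Sp a 1) 1.
Proof.
  intros H eps He. destruct (H eps He) as [N HN]. exists (S N). intros n Hn.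
  destruct n; [lia|]. rewrite Sp_1. unfold Rdist in *. specialize (HN (S n) ltac:(lia)).
  replace (1 - q (S n) - 1) with (- (q (S n) - 0)) by ring. rewrite Rabs_Ropp. auto.
Qed.
End Gen.

Section Nonneg.
Variable a : nat -> R.
Hypothesis ap : forall n, 0 <= a n.

Lemma Sp_grow s : 0 <= s -> forall M, Sp a s M <= Sp a s (S M).
Proof.
  intros Hs M. unfold Sp. rewrite tech5. assert (0 <= a (S M) * s ^ S M)
    by (apply Rmult_le_pos; auto; apply pow_le; auto). lra.
Qed.

Lemma Sp_mono s t M : 0 <= s <= t -> Sp a s M <= Sp a t M.
Proof.
  intros Hs. unfold Sp. apply sum_Rle. intros n _. apply Rmult_le_compat_l; auto.
  apply pow_incr. auto.
Qed.

Lemma Sp_tail s t M N : 0 <= s <= t -> (M <= N)%nat -> Sp a s N - Sp a s M <= Sp a t N - Sp a t M.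
Proof.
  intros Hs HMN. induction HMN; [lra|]. unfold Sp in *. rewrite !tech5.
  assert (a (S m) * s ^ S m <= a (S m) * t ^ S m).
  { apply Rmult_le_compat_l; auto. apply pow_incr. auto. }
  lra.
Qed.

Lemma Sp_gap s t M : 0 <= s <= t -> a 2%nat * (t ^ 2 - s ^ 2) <= Sp a t (S (S M)) - Sp a s (S (S M)).
Proof.
  intros Hs. induction M.
  - unfold Sp. simpl.
    assert (a 0%nat * 1 - a 0%nat * 1 = 0) by ring.
    assert (0 <= a 1%nat * (t * 1) - a 1%nat * (s * 1)) by (rewrite <- Rmult_minus_distr_l; apply Rmult_le_pos; auto; lra).
    lra.
  - unfold Sp in *. rewrite !(tech5 _ (S (S M))).
    assert (a (S (S (S M))) * s ^ S (S (S M)) <= a (S (S (S M))) * t ^ S (S (S M))).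
    { apply Rmult_le_compat_l; auto. apply pow_incr. auto. }
    lra.
Qed.

Lemma Sp_le_lim s y : 0 <= s -> Un_cv (Sp a s) y -> forall M, Sp a s M <= y.
Proof.
  intros Hs Hc M. apply (growing_ineq (Sp a s)); auto. intro n. apply Sp_grow; auto.
Qed.
End Nonneg.

Lemma lim_le (u : nat -> R) l B M0 : Un_cv u l -> (forall M, (M0 <= M)%nat -> u M <= B) -> l <= B.
Proof.
  intros Hc Hb. destruct (Rle_dec l B) as [|Hn]; auto. exfalso.
  destruct (Hc (l - B) ltac:(lra)) as [N HN]. specialize (HN (max N M0) ltac:(lia)).
  specialize (Hb (max N M0) ltac:(lia)). unfold Rdist in HN.
  apply Rabs_def2 in HN. lra.
Qed.

Lemma lim_ge (u : nat -> R) l B M0 : Un_cv u l -> (forall M, (M0 <= M)%nat -> B <= u M) -> B <= l.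
Proof.
  intros Hc Hb. destruct (Rle_dec B l) as [|Hn]; auto. exfalso.
  destruct (Hc (B - l) ltac:(lra)) as [N HN]. specialize (HN (max N M0) ltac:(lia)).
  specialize (Hb (max N M0) ltac:(lia)). unfold Rdist in HN.
  apply Rabs_def2 in HN. lra.
Qed.

Lemma mono_cv (u : nat -> R) B : (forall n, u n <= u (S n)) -> (forall n, u n <= B) -> exists l, Un_cv u l.
Proof.
  intros Hg Hb. destruct (growing_cv u Hg) as [l Hl].
  - exists B. intros x [i ->]. auto.
  - exists l; auto.
Qed.

Section Cmp.
Variables (a1 q1 a2 q2 : nat -> R) (d : R).
Hypothesis a10 : a1 0%nat = 0.
Hypothesis a1S : forall n, a1 (S n) = q1 n - q1 (S n).
Hypothesis q10 : q1 0%nat = 1.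
Hypothesis a20 : a2 0%nat = 0.
Hypothesis a2S : forall n, a2 (S n) = q2 n - q2 (S n).
Hypothesis q20 : q2 0%nat = 1.
Hypothesis H12 : forall k, q1 k <= q2 k <= q1 k + d.

Lemma Sp_cmp s M : 0 <= s <= 1 -> Sp a2 s M <= Sp a1 s M <= Sp a2 s M + 2 * d.
Proof.
  intros Hs. assert (Hd : 0 <= d) by (pose proof (H12 0%nat); lra).
  destruct M.
  - unfold Sp. simpl. rewrite a10, a20. lra.
  - rewrite (Sp_id a1 q1), (Sp_id a2 q2); auto.
    assert (HW : 0 <= Wp q2 s M - Wp q1 s M <= d * sum_f_R0 (fun k => s ^ k) M).
    { unfold Wp. rewrite <- minus_sum, scal_sum. split.
      - apply cond_pos_sum. intros k. rewrite <- Rmult_minus_distr_r. apply Rmult_le_pos.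
        pose proof (H12 k); lra. apply pow_le; lra.
      - apply sum_Rle. intros k _. rewrite <- Rmult_minus_distr_r. rewrite Rmult_comm.
        apply Rmult_le_compat_l. apply pow_le; lra. pose proof (H12 k); lra. }
    pose proof (GP_finite s M).
    assert (Hp : forall n, 0 <= s ^ n <= 1).
    { intros n; split; [apply pow_le; lra|]. rewrite <- (pow1 n). apply pow_incr. lra. }
    assert (HG : 0 <= (1 - s) * sum_f_R0 (fun k => s ^ k) M <= 1).
    { replace ((1 - s) * sum_f_R0 (fun k => s ^ k) M) with (1 - s ^ (M + 1)) by lra.
      pose proof (Hp (M + 1)%nat). lra. }
    set (W := Wp q2 s M - Wp q1 s M) in *.
    set (G := sum_f_R0 (fun k => s ^ k) M) in *.
    pose proof (H12 (S M)). pose proof (Hp (S M)).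
    assert (E : 1 + (s - 1) * Wp q1 s M - q1 (S M) * s ^ S M
              = (1 + (s - 1) * Wp q2 s M - q2 (S M) * s ^ S M) + (1 - s) * W + (q2 (S M) - q1 (S M)) * s ^ S M)
      by (unfold W; ring).
    rewrite E.
    assert (0 <= (1 - s) * W <= d) .
    { split. apply Rmult_le_pos; lra.
      apply Rle_trans with ((1 - s) * (d * G)). apply Rmult_le_compat_l; lra.
      replace ((1 - s) * (d * G)) with (d * ((1 - s) * G)) by ring.
      rewrite <- (Rmult_1_r d) at 2. apply Rmult_le_compat_l; lra. }
    assert (0 <= (q2 (S M) - q1 (S M)) * s ^ S M <= d).
    { split. apply Rmult_le_pos; lra.
      rewrite <- (Rmult_1_r d). apply Rmult_le_compat; lra. }
    lra.
Qed.
End Cmp.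

Lemma Sp_cont a M x : continuity_pt (fun s => Sp a s M) x.
Proof.
  induction M.
  - unfold Sp. simpl. apply (continuity_pt_const (fun s => a 0%nat * 1)). intros u v; reflexivity.
  - unfold Sp in *. 
    change (continuity_pt (fun s => sum_f_R0 (fun n => a n * s ^ n) M + a (S M) * s ^ S M) x).
    apply (continuity_pt_plus (fun s => sum_f_R0 (fun n => a n * s ^ n) M) (fun s => a (S M) * s ^ S M)); auto.
    apply (continuity_pt_mult (fun _ => a (S M)) (fun s => s ^ S M)).
    + apply continuity_pt_const. intros u v; reflexivity.
    + apply derivable_continuous_pt. apply derivable_pow.
Qed.

Lemma lip_cont (f : R -> R) : (forall s t, Rabs (f s - f t) <= Rabs (s - t)) -> forall x, continuity_pt f x.
Proof.
  intros Hl x eps He. exists eps. split; auto. intros y [_ Hy].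
  simpl in *. unfold R_dist in *. eapply Rle_lt_trans; [apply Hl|]. auto.
Qed.

Definition cl (v s : R) := Rmax 0 (Rmin v s).

Lemma cl_lip v s t : 0 <= v -> Rabs (cl v s - cl v t) <= Rabs (s - t).
Proof.
  intros Hv. unfold cl, Rmax, Rmin.
  destruct (Rle_dec v s), (Rle_dec v t); repeat destruct (Rle_dec 0 _);
  unfold Rabs; repeat destruct Rcase_abs; lra.
Qed.

Lemma cl_in v s : 0 <= v -> 0 <= cl v s <= v.
Proof. intros Hv. unfold cl, Rmax, Rmin. destruct (Rle_dec v s); destruct (Rle_dec 0 _); lra. Qed.

Lemma cl_id v s : 0 <= s <= v -> cl v s = s.
Proof. intros Hs. unfold cl, Rmax, Rmin. destruct (Rle_dec v s); destruct (Rle_dec 0 _); lra. Qed.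

Lemma ucont (fn : nat -> R -> R) (f : R -> R) x :
  (forall n, continuity_pt (fn n) x) ->
  (forall eps, 0 < eps -> exists N, forall s, Rabs (f s - fn N s) < eps) ->
  continuity_pt f x.
Proof.
  intros Hc Hu eps He. destruct (Hu (eps / 3) ltac:(lra)) as [N HN].
  destruct (Hc N (eps / 3) ltac:(lra)) as [del [Hd Hdel]].
  exists del. split; auto. intros y Hy. specialize (Hdel y Hy). simpl in *. unfold R_dist in *.
  pose proof (HN y). pose proof (HN x).
  apply Rabs_def2 in H. apply Rabs_def2 in H0. apply Rabs_def2 in Hdel. apply Rabs_def1; lra.
Qed.

Lemma cv_const c : Un_cv (fun _ => c) c.
Proof. intros e He. exists O. intros. unfold Rdist. rewrite Rminus_diag, Rabs_R0. lra. Qed.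

Lemma Sp_exist a (ap : forall n, 0 <= a n) u v Lu Lv y :
  0 <= u < v -> Un_cv (Sp a u) Lu -> Un_cv (Sp a v) Lv -> Lu < y < Lv ->
  exists s, u <= s <= v /\ Un_cv (Sp a s) y.
Proof.
  intros Huv Hu Hv Hy.
  assert (Hb : forall s, 0 <= s <= v -> exists l, Un_cv (Sp a s) l).
  { intros s Hs. apply (mono_cv _ Lv). apply Sp_grow; auto; lra.
    intros n. eapply Rle_trans. apply (Sp_mono a ap s v n Hs). apply Sp_le_lim; auto; lra. }
  set (F := fun s => epsilon (inhabits 0) (fun l => Un_cv (Sp a s) l)).
  assert (HF : forall s, 0 <= s <= v -> Un_cv (Sp a s) (F s)).
  { intros s Hs. unfold F. apply epsilon_spec. auto. }
  assert (Hunif : forall s M, 0 <= s <= v -> 0 <= F s - Sp a s M <= Lv - Sp a v M).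
  { intros s M Hs. split.
    - pose proof (Sp_le_lim a ap s (F s) ltac:(lra) (HF s Hs) M). lra.
    - apply (lim_le (fun N => Sp a s N - Sp a s M) _ _ M).
      + apply CV_minus; [apply HF; auto|apply cv_const].
      + intros N HN. pose proof (Sp_tail a ap s v M N Hs HN).
        pose proof (Sp_le_lim a ap v Lv ltac:(lra) Hv N). lra. }
  set (g := fun s => F (cl v s) - y).
  assert (Hg : forall x, continuity_pt g x).
  { intros x. apply (ucont (fun N s => Sp a (cl v s) N - y)).
    - intros N. apply (continuity_pt_minus (fun s => Sp a (cl v s) N) (fun _ => y)).
      + apply (continuity_pt_comp (cl v) (fun s => Sp a s N)).
        apply lip_cont. intros; apply cl_lip; lra. apply Sp_cont.
      + apply continuity_pt_const. intros ? ?; reflexivity.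
    - intros eps He. destruct (Hv eps He) as [N HN]. exists N. intros s.
      specialize (HN N (le_n _)). unfold Rdist in HN. apply Rabs_def2 in HN.
      pose proof (Hunif (cl v s) N (cl_in v s ltac:(lra))). unfold g.
      rewrite Rabs_pos_eq; lra. }
  assert (Fu : F u = Lu) by (apply (UL_sequence (Sp a u)); auto; apply HF; lra).
  assert (Fv : F v = Lv) by (apply (UL_sequence (Sp a v)); auto; apply HF; lra).
  destruct (IVT g u v Hg ltac:(lra)) as [z [Hz Hgz]].
  - unfold g. rewrite cl_id by lra. lra.
  - unfold g. rewrite cl_id by lra. lra.
  - exists z. split; auto. unfold g in Hgz. rewrite cl_id in Hgz by lra.
    replace y with (F z) by lra. apply HF; lra.
Qed.

Lemma exp_le' x y : x <= y -> exp x <= exp y.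
Proof. intros [H|H]; [left; apply exp_increasing; auto| subst; lra]. Qed.

Lemma cv_ext (u v : nat -> R) l : (forall n, u n = v n) -> Un_cv u l -> Un_cv v l.
Proof. intros E H e He. destruct (H e He) as [N HN]. exists N. intros n Hn. rewrite <- E. auto. Qed.

Lemma exp_pow_n lam n : exp (- lam * INR n) = exp (- lam) ^ n.
Proof.
  induction n; simpl. - rewrite Rmult_0_r, exp_0. reflexivity.
  - rewrite <- IHn. rewrite <- exp_plus. f_equal. destruct n; simpl; ring.
Qed.

Lemma Qeq_Sp T lam y : Q_eq T lam y <-> Un_cv (Sp (aa (hitb T)) (exp (- lam))) y.
Proof.
  assert (E : forall M, sum_f_R0 (Q_term T lam) M = Sp (aa (hitb T)) (exp (- lam)) M).
  { intros M. unfold Sp. apply sum_eq. intros i _. unfold Q_term. rewrite tau_prob_N, exp_pow_n. reflexivity. }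
  split; intros H.
  - apply (cv_ext (fun M => sum_f_R0 (Q_term T lam) M)); auto.
  - unfold Q_eq, infinite_sum. apply (cv_ext (Sp (aa (hitb T)) (exp (- lam))) (fun M => sum_f_R0 (Q_term T lam) M) y); auto.
Qed.

Lemma Qeq_of_s T s y : 0 < s -> Un_cv (Sp (aa (hitb T)) s) y -> Q_eq T (- ln s) y.
Proof. intros Hs H. apply Qeq_Sp. rewrite Ropp_involutive, exp_ln; auto. Qed.

Lemma Qinv_spec T y : (exists lam, Q_eq T lam y) -> Q_eq T (Qinv T y) y.
Proof. intros H. unfold Qinv. apply epsilon_spec. auto. Qed.

Lemma cT_pos T : (3 <= T)%nat -> 0 < cT T.
Proof.
  intros HT. unfold cT. pose proof PI_RGT_0. assert (3 <= INR T) by (replace 3 with (INR 3) by (simpl; lra); apply le_INR; lia).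
  assert (0 < PI / INR T) by (apply Rdiv_lt_0_compat; lra).
  assert (PI / INR T < PI / 2).
  { apply Rmult_lt_reg_r with (INR T); [lra|]. field_simplify; [|lra]. nra. }
  apply cos_gt_0; lra.
Qed.

Lemma pow_cv0 r : 0 <= r < 1 -> Un_cv (fun n => r ^ n) 0.
Proof.
  intros Hr e He. destruct (pow_lt_1_zero r ltac:(rewrite Rabs_pos_eq; lra) e He) as [N HN].
  exists N. intros n Hn. unfold Rdist. rewrite Rminus_0_r. auto.
Qed.

Lemma qT_cv0 T : (2 <= T)%nat -> Un_cv (qq (hitb (Some T))) 0.
Proof.
  intros HT e He. pose proof (cT_range T HT).
  destruct (pow_cv0 (cT T) H e He) as [N HN]. exists (S N). intros n Hn. destruct n; [lia|].
  specialize (HN n ltac:(lia)). unfold Rdist in *. rewrite Rminus_0_r in *.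
  pose proof (qq_bounds (hitb (Some T)) (S n)). pose proof (qT_upper T HT n).
  rewrite Rabs_pos_eq in * by (try apply pow_le; lra). lra.
Qed.

Lemma qI_cv0 : Un_cv (qq (hitb None)) 0.
Proof.
  intros e He. destruct (INR_unbounded (2 / e)) as [K HK].
  set (T := S (S K)). assert (HT : (2 <= T)%nat) by (unfold T; lia).
  assert (HTe : 1 / INR T < e / 2).
  { assert (INR K < INR T) by (apply lt_INR; unfold T; lia).
    assert (0 < INR T) by (apply INRT_pos; auto).
    apply Rmult_lt_reg_r with (INR T); auto. field_simplify; [|lra].
    assert (2 / e < INR T) by lra.
    apply Rmult_lt_reg_r with (/ e). apply Rinv_0_lt_compat; lra.
    field_simplify; lra. }
  destruct (qT_cv0 T HT (e / 2) ltac:(lra)) as [N HN]. exists N. intros n Hn.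
  specialize (HN n Hn). unfold Rdist in *. rewrite Rminus_0_r in *.
  pose proof (qq_bounds (hitb None) n). pose proof (qq_bounds (hitb (Some T)) n).
  pose proof (qinf_upper T HT n).
  rewrite Rabs_pos_eq in * by lra. lra.
Qed.

Lemma good_aa_spec h : (forall n, aa h (S n) = qq h n - qq h (S n)) /\ aa h 0%nat = 0 /\ qq h 0%nat = 1.
Proof. split; [apply aa_S|split; [apply aa_0|apply qq_0]]. Qed.

Lemma ex_small h : Un_cv (qq h) 0 -> forall y, 0 < y <= 1 -> exists s, 0 < s <= 1 /\ Un_cv (Sp (aa h) s) y.
Proof.
  intros Hq y Hy.
  pose proof (cv_1 (aa h) (qq h) (aa_0 h) (aa_S h) (qq_0 h) Hq) as H1.
  destruct (Req_dec y 1) as [->|Hy1].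
  - exists 1. split; [lra|auto].
  - assert (H0 : Un_cv (Sp (aa h) 0) 0).
    { apply (cv_ext (fun _ => 0)); [intros; rewrite Sp_0; auto; apply aa_0|apply cv_const]. }
    destruct (Sp_exist (aa h) (aa_nonneg h) 0 1 0 1 y ltac:(lra) H0 H1 ltac:(lra)) as [s [Hs Hc]].
    exists s. split; auto. split; [|lra].
    destruct Hs as [[Hs|Hs] _]; auto. subst s.
    pose proof (UL_sequence _ _ _ Hc H0). lra.
Qed.

Lemma bern z n : 0 <= z <= 1 -> 1 - INR n * z <= (1 - z) ^ n.
Proof.
  intros Hz. induction n; [simpl; lra|]. rewrite S_INR. simpl pow.
  assert (0 <= INR n) by apply pos_INR.
  assert (0 <= INR n * z * z) by (apply Rmult_le_pos; [apply Rmult_le_pos|]; lra).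
  nra.
Qed.

Lemma Wp_grow q s M N : (forall n, 0 <= q n) -> 0 <= s -> (M <= N)%nat -> Wp q s M <= Wp q s N.
Proof.
  intros Hq Hs HMN. induction HMN; [lra|]. unfold Wp in *. rewrite tech5.
  assert (0 <= q (S m) * s ^ S m) by (apply Rmult_le_pos; auto; apply pow_le; auto). lra.
Qed.

Lemma ex_big T : (3 <= T)%nat -> forall y, 1 < y -> exists s, 1 <= s /\ Un_cv (Sp (aa (hitb (Some T))) s) y.
Proof.
  intros HT y Hy. assert (HT2 : (2 <= T)%nat) by lia.
  set (r := cT T). set (sg := sT T). set (q := qq (hitb (Some T))). set (a := aa (hitb (Some T))).
  assert (Hr : 0 < r < 1) by (pose proof (cT_range T HT2); pose proof (cT_pos T HT); unfold r; lra).
  assert (Hsg : 0 < sg <= 1) by (split; [apply sT_pos; auto | apply SIN_bound]).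
  assert (Hql : forall n, sg * r ^ n <= q (S n)) by (intros; apply qT_lower; auto).
  assert (Hqu : forall n, q (S n) <= r ^ n) by (intros; apply qT_upper; auto).
  assert (Hq0 : q 0%nat = 1) by apply qq_0.
  assert (Hqb : forall n, 0 <= q n <= 1) by (intros; apply qq_bounds).
  destruct (INR_unbounded (1 / (1 - r) + 4 * (y + 1) / ((1 - r) * sg) + 1)) as [K HK].
  assert (HK1 : 0 < 1 / (1 - r)) by (apply Rdiv_lt_0_compat; lra).
  assert (HK2 : 0 < 4 * (y + 1) / ((1 - r) * sg)) by (apply Rdiv_lt_0_compat; [lra| apply Rmult_lt_0_compat; lra]).
  assert (HKpos : 1 < INR K) by lra.
  set (k := INR K) in *.
  assert (Hk1 : 1 - r >= 1 / k).
  { apply Rle_ge. apply Rmult_le_reg_r with k; [lra|]. field_simplify; [|lra].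
    assert (1 / (1 - r) < k) by lra.
    pose proof (Rmult_lt_compat_r (1 - r) _ _ ltac:(lra) H) as H'.
    replace (1 / (1 - r) * (1 - r)) with 1 in H' by (field; lra). lra. }
  assert (Hk2 : y + 1 <= (1 - r) * sg * k / 4).
  { assert (4 * (y + 1) / ((1 - r) * sg) < k) by lra.
    assert (0 < (1 - r) * sg) by (apply Rmult_lt_0_compat; lra).
    pose proof (Rmult_lt_compat_r ((1 - r) * sg) _ _ H0 H) as H'.
    replace (4 * (y + 1) / ((1 - r) * sg) * ((1 - r) * sg)) with (4 * (y + 1)) in H' by (field; lra). lra. }
  set (x := 1 - 1 / (2 * k)).
  assert (Hx : 1/2 <= x < 1 /\ r < x /\ (1 - r) / 2 <= x - r).
  { unfold x. assert (0 < 1 / (2 * k)) by (apply Rdiv_lt_0_compat; lra).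
    assert (1 / (2 * k) <= 1 / 2).
    { apply Rmult_le_reg_r with (2 * k); [lra|]. field_simplify; lra. }
    assert (1 / (2 * k) = (1 / k) / 2) by (field; lra). lra. }
  set (v := x / r).
  assert (Hvr : v * r = x) by (unfold v; field; lra).
  assert (Hv1 : 1 < v).
  { unfold v. apply Rmult_lt_reg_r with r; [lra|]. field_simplify; lra. }
  assert (Hvx : x <= v).
  { unfold v. apply Rmult_le_reg_r with r; [lra|]. field_simplify; [|lra]. nra. }
  assert (Hvm1 : (1 - r) / 2 <= v - 1).
  { assert (v - 1 = (x - r) / r) by (unfold v; field; lra).
    assert (x - r <= (x - r) / r).
    { apply Rmult_le_reg_r with r; [lra|]. field_simplify; [|lra]. nra. }
    lra. }
  assert (Hterm : forall n, sg * x ^ n <= q n * v ^ n <= x ^ n / r).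
  { intros [|j].
    - rewrite Hq0. simpl. split; [lra|]. apply Rmult_le_reg_r with r; [lra|]. field_simplify; lra.
    - assert (Ex : x ^ j = r ^ j * v ^ j) by (rewrite <- Hvr, Rpow_mult_distr; ring).
      assert (0 <= r ^ j) by (apply pow_le; lra). assert (0 <= v ^ j) by (apply pow_le; lra).
      assert (0 <= x ^ j) by (apply pow_le; lra).
      pose proof (Hql j). pose proof (Hqu j). simpl pow. split.
      + apply Rle_trans with (sg * r ^ j * v * v ^ j).
        * rewrite Ex. assert (0 <= sg * r ^ j * v ^ j) by (apply Rmult_le_pos; [apply Rmult_le_pos|]; lra). nra.
        * assert (0 <= v * v ^ j) by (apply Rmult_le_pos; lra). nra.
      + apply Rle_trans with (r ^ j * (v * v ^ j)).
        * assert (0 <= v * v ^ j) by (apply Rmult_le_pos; lra). nra.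
        * rewrite Ex, <- Hvr. apply Req_le. field. lra. }
  assert (HW : forall M, Wp q v M <= 1 / (r * (1 - x))).
  { intros M. unfold Wp. apply Rle_trans with (sum_f_R0 (fun n => x ^ n / r) M).
    - apply sum_Rle. intros n _. apply Hterm.
    - unfold Rdiv at 1. rewrite <- (scal_sum (fun n => x ^ n) M (/ r)) . pose proof (GP_finite x M) as HG.
      assert (HG2 : sum_f_R0 (fun n => x ^ n) M = (1 - x ^ (M + 1)) / (1 - x)).
      { apply Rmult_eq_reg_r with (x - 1); [|lra]. rewrite HG. field. lra. }
      rewrite HG2. assert (0 <= x ^ (M + 1)) by (apply pow_le; lra).
      apply Rmult_le_reg_r with (r * (1 - x)). apply Rmult_lt_0_compat; lra.
      field_simplify; lra. }
  assert (Hcvv : exists Lv, Un_cv (Sp a v) Lv).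
  { apply (mono_cv _ (1 + (v - 1) * (1 / (r * (1 - x))))).
    - apply Sp_grow; [apply aa_nonneg|lra].
    - intros [|M].
      + unfold Sp. simpl. unfold a. rewrite aa_0. assert (0 < 1 / (r * (1 - x))).
        apply Rdiv_lt_0_compat; [lra| apply Rmult_lt_0_compat; lra]. nra.
      + unfold a. rewrite (Sp_id _ q) by (apply aa_0 || apply aa_S || apply qq_0).
        pose proof (HW M). assert (0 <= q (S M) * v ^ S M) by (apply Rmult_le_pos; [apply Hqb|apply pow_le; lra]).
        nra. }
  destruct Hcvv as [Lv HLv].
  assert (HLv_big : y < Lv).
  { destruct (pow_cv0 x ltac:(lra) (1 / v) ltac:(apply Rdiv_lt_0_compat; lra)) as [N HN].
    set (M := max N K). specialize (HN M ltac:(unfold M; lia)). unfold Rdist in HN.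
    rewrite Rminus_0_r, Rabs_pos_eq in HN by (apply pow_le; lra).
    pose proof (Sp_le_lim a (aa_nonneg _) v Lv ltac:(lra) HLv (S M)).
    unfold a in H. rewrite (Sp_id _ q) in H by (apply aa_0 || apply aa_S || apply qq_0).
    assert (HWK : sg * (INR K + 1) * x ^ K <= Wp q v K).
    { unfold Wp. apply Rle_trans with (sum_f_R0 (fun _ => sg * x ^ K) K).
      - rewrite sum_cte, S_INR. lra.
      - apply sum_Rle. intros n Hn. eapply Rle_trans; [|apply Hterm].
        apply Rmult_le_compat_l; [lra|]. apply Rle_trans with (x ^ (n + (K - n))).
        + replace (n + (K - n))%nat with K by lia. lra.
        + rewrite pow_add. assert (0 <= x ^ n) by (apply pow_le; lra).
          assert (x ^ (K - n) <= 1). { rewrite <- (pow1 (K - n)). apply pow_incr. lra. }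
          nra. }
    assert (HxK : 1 / 2 <= x ^ K).
    { pose proof (bern (1 / (2 * k)) K). fold k in H0. unfold x.
      assert (0 <= 1 / (2 * k) <= 1).
      { split. left; apply Rdiv_lt_0_compat; lra. apply Rmult_le_reg_r with (2 * k); [lra|]. field_simplify; lra. }
      specialize (H0 H1). replace (1 - k * (1 / (2 * k))) with (1/2) in H0 by (field; lra). lra. }
    pose proof (Wp_grow q v K M ltac:(intros; apply Hqb) ltac:(lra) ltac:(unfold M; lia)).
    assert (Hsub : q (S M) * v ^ S M <= v * x ^ M).
    { pose proof (Hterm (S M)). simpl pow in H1 |- *. replace (x * x ^ M / r) with (v * x ^ M) in H1 by (unfold v; field; lra). lra. }
    assert (v * x ^ M < 1).
    { assert (v * (1 / v) = 1) by (field; lra). nra. }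
    assert (Hsgk : 0 <= sg * k) by (apply Rmult_le_pos; lra).
    assert (sg * k / 2 <= Wp q v M) by (fold k in HWK; nra).
    assert ((1 - r) / 2 * (sg * k / 2) <= (v - 1) * Wp q v M).
    { apply Rmult_le_compat; try lra. }
    assert ((1 - r) / 2 * (sg * k / 2) = (1 - r) * sg * k / 4) by field. lra. }
  assert (HL1 : Un_cv (Sp a 1) 1).
  { apply (cv_1 a q); [apply aa_0|apply aa_S|apply qq_0|apply qT_cv0; auto]. }
  destruct (Sp_exist a (aa_nonneg _) 1 v 1 Lv y ltac:(lra) HL1 HLv ltac:(lra)) as [s [Hs Hc]].
  exists s. split; [lra|auto].
Qed.

Lemma cv_le_ev (u v : nat -> R) l1 l2 N0 : Un_cv u l1 -> Un_cv v l2 ->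
  (forall n, (N0 <= n)%nat -> u n <= v n) -> l1 <= l2.
Proof.
  intros Hu Hv H. pose proof (CV_minus v u l2 l1 Hv Hu).
  assert (0 <= l2 - l1). { apply (lim_ge _ _ 0 N0 H0). intros n Hn. specialize (H n Hn). lra. }
  lra.
Qed.

Lemma cv_plus_c (u : nat -> R) l c : Un_cv u l -> Un_cv (fun n => u n + c) (l + c).
Proof. intros H. apply CV_plus; auto. apply cv_const. Qed.

Lemma Sp_gap2 a (ap : forall n, 0 <= a n) s t M : 0 <= s <= t -> (2 <= M)%nat ->
  a 2%nat * (t ^ 2 - s ^ 2) <= Sp a t M - Sp a s M.
Proof. intros Hs HM. destruct M as [|[|M]]; [lia|lia|]. apply Sp_gap; auto. Qed.

Lemma tail_lb a q (ap : forall n, 0 <= a n) (aS : forall n, a (S n) = q n - q (S n)) s :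
  1 <= s -> forall j M, (j <= M)%nat -> s ^ (S j) * (q j - q M) <= Sp a s M.
Proof.
  intros Hs j M HjM. induction HjM.
  - rewrite Rminus_diag, Rmult_0_r. unfold Sp. apply cond_pos_sum. intros n.
    apply Rmult_le_pos; auto. apply pow_le; lra.
  - unfold Sp in *. rewrite tech5, aS.
    assert (s ^ S j <= s ^ S m) by (apply Rle_pow; auto; lia).
    assert (0 <= q m - q (S m)) by (rewrite <- aS; auto).
    assert ((q m - q (S m)) * s ^ S j <= (q m - q (S m)) * s ^ S m) by (apply Rmult_le_compat_l; auto).
    nra.
Qed.

Theorem lemma4 (delta : R) :
  Un_cv (fun k : nat => Qinv (Some (2 * (k + 1))%nat) (exp (- delta)))
        (Qinv None (Rmin (exp (- delta)) 1)).
Proof.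
  set (y := exp (- delta)). assert (Hy : 0 < y) by apply exp_pos.
  set (y' := Rmin y 1).
  assert (Hy' : 0 < y' <= 1 /\ y' <= y /\ (y <= 1 -> y' = y) /\ (1 < y -> y' = 1)).
  { unfold y', Rmin. destruct (Rle_dec y 1); lra. }
  set (aI := aa (hitb None)). set (qI := qq (hitb None)).
  assert (HI : Q_eq None (Qinv None y') y').
  { apply Qinv_spec. destruct (ex_small (hitb None) qI_cv0 y' ltac:(lra)) as [s [Hs Hc]].
    exists (- ln s). apply Qeq_of_s; auto; lra. }
  set (li := Qinv None y') in *. apply Qeq_Sp in HI. set (si := exp (- li)) in *.
  assert (Hsi0 : 0 < si) by apply exp_pos.
  assert (aI2 : 1/2 <= aI 2%nat) by (apply aa_2, good_I).
  assert (aIp : forall n, 0 <= aI n) by apply aa_nonneg.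
  assert (Hsi1 : si <= 1).
  { destruct (Rle_dec si 1) as [|Hn0]; auto. exfalso.
    assert (H1 : Un_cv (Sp aI 1) 1) by (apply (cv_1 aI qI); [apply aa_0|apply aa_S|apply qq_0|apply qI_cv0]).
    assert (1 + 1/2 * (si ^ 2 - 1) <= y').
    { apply (cv_le_ev (fun M => Sp aI 1 M + 1/2 * (si ^ 2 - 1)) (Sp aI si) _ _ 2); auto.
      apply cv_plus_c; auto. intros n Hn. pose proof (Sp_gap2 aI aIp 1 si n ltac:(lra) Hn).
      assert (1 ^ 2 = 1) by ring. assert (0 <= si ^ 2 - 1) by nra. nra. }
    assert (0 < si ^ 2 - 1) by nra. lra. }
  assert (Hli : 0 <= li).
  { destruct (Rle_dec 0 li) as [|Hn0]; auto. exfalso. unfold si in Hsi1.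
    assert (exp 0 < exp (- li)) by (apply exp_increasing; lra). rewrite exp_0 in H. lra. }
  assert (Hk : forall k, (1 <= k)%nat -> Q_eq (Some (2 * (k + 1))%nat) (Qinv (Some (2 * (k + 1))%nat) y) y).
  { intros k Hk1. apply Qinv_spec. destruct (Rle_dec y 1).
    - destruct (ex_small (hitb (Some (2 * (k + 1))%nat)) (qT_cv0 (2 * (k + 1))%nat ltac:(lia)) y ltac:(lra)) as [s [Hs Hc]].
      exists (- ln s). apply Qeq_of_s; auto; lra.
    - destruct (ex_big (2 * (k + 1))%nat ltac:(lia) y ltac:(lra)) as [s [Hs Hc]].
      exists (- ln s). apply Qeq_of_s; auto; lra. }
  intros eps Heps.
  assert (He1 : 0 < exp (- eps) < 1).
  { split. apply exp_pos. rewrite <- exp_0. apply exp_increasing. lra. }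
  set (s1 := si * exp (- eps)).
  set (c1 := 1/2 * (si ^ 2 - s1 ^ 2)).
  assert (Hs1 : 0 < s1 < si) by (unfold s1; split; [apply Rmult_lt_0_compat; lra | nra]).
  assert (Hc1 : 0 < c1) by (unfold c1; nra).
  destruct (continuity_cos 0 (1 - exp (- eps)) ltac:(lra)) as [dc [Hdc Hcos]].
  pose proof PI_RGT_0.
  assert (Hq1 : 0 < 2 / c1) by (apply Rdiv_lt_0_compat; lra).
  assert (Hq2 : 0 < PI / dc) by (apply Rdiv_lt_0_compat; lra).
  destruct (INR_unbounded (2 / c1 + PI / dc + 2)) as [N HN].
  exists N. intros k HkN.
  assert (HkR : INR N <= INR k) by (apply le_INR; lia).
  set (T := (2 * (k + 1))%nat).
  assert (HTR : INR T = 2 * (INR k + 1)) by (unfold T; rewrite mult_INR, plus_INR; simpl; ring).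
  assert (Hk1 : (1 <= k)%nat).
  { destruct k; [|lia]. simpl in HkR. lra. }
  assert (HT3 : (3 <= T)%nat) by (unfold T; lia).
  assert (HT2 : (2 <= T)%nat) by lia.
  assert (HTbig : 2 / c1 + PI / dc < INR T) by lra.
  assert (HTc : 2 / INR T < c1).
  { assert (2 / c1 < INR T) by lra.
    apply Rmult_lt_reg_r with (INR T); [lra|]. field_simplify; [|lra].
    pose proof (Rmult_lt_compat_r c1 _ _ Hc1 H0). replace (2 / c1 * c1) with 2 in H1 by (field; lra). lra. }
  assert (HTd : PI / INR T < dc).
  { assert (PI / dc < INR T) by lra.
    apply Rmult_lt_reg_r with (INR T); [lra|]. field_simplify; [|lra].
    pose proof (Rmult_lt_compat_r dc _ _ Hdc H0). replace (PI / dc * dc) with PI in H1 by (field; lra). lra. }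
  set (aT := aa (hitb (Some T))). set (qT := qq (hitb (Some T))).
  assert (aT2 : 1/2 <= aT 2%nat) by (apply aa_2, good_T; auto).
  assert (aTp : forall n, 0 <= aT n) by apply aa_nonneg.
  assert (Hcmp : forall s M, 0 <= s <= 1 -> Sp aI s M <= Sp aT s M <= Sp aI s M + 2 * (1 / INR T)).
  { intros s M Hs. apply (Sp_cmp aT qT aI qI); try (apply aa_0 || apply aa_S || apply qq_0); auto.
    intros j. split; [apply qT_le_qinf; auto | apply qinf_upper; auto]. }
  pose proof (Hk k Hk1) as Ck. fold T in Ck. fold y in Ck.
  set (lk := Qinv (Some T) y) in *. apply Qeq_Sp in Ck. set (sk := exp (- lk)) in *.
  assert (Hsk0 : 0 < sk) by apply exp_pos.
  unfold Rdist. apply Rabs_def1.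
  - destruct (Rlt_dec (lk - li) eps) as [|Hn]; auto. exfalso.
    assert (Hsk1 : sk <= s1).
    { unfold sk, s1, si. rewrite <- exp_plus. apply exp_le'. lra. }
    assert (y <= y' - c1 + 2 * (1 / INR T)).
    { apply (lim_le (Sp aT sk) _ _ 2 Ck). intros M HM.
      pose proof (Sp_mono aT aTp sk s1 M ltac:(lra)).
      pose proof (Hcmp s1 M ltac:(lra)).
      pose proof (Sp_gap2 aI aIp s1 si M ltac:(lra) HM).
      pose proof (Sp_le_lim aI aIp si y' ltac:(lra) HI M).
      assert (0 <= si ^ 2 - s1 ^ 2) by (unfold c1 in Hc1; lra).
      assert (1/2 * (si ^ 2 - s1 ^ 2) <= aI 2%nat * (si ^ 2 - s1 ^ 2)) by nra.
      unfold c1. lra. }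
    replace (2 * (1 / INR T)) with (2 / INR T) in H0 by (field; lra). lra.
  - destruct (Rlt_dec (- eps) (lk - li)) as [|Hn]; auto. exfalso.
    set (s2 := si * exp eps).
    assert (He2 : 1 < exp eps) by (rewrite <- exp_0; apply exp_increasing; lra).
    assert (Hs2 : si < s2) by (unfold s2; nra).
    assert (Hsk2 : s2 <= sk).
    { unfold sk, s2, si. rewrite <- exp_plus. apply exp_le'. lra. }
    destruct (Rle_dec y 1) as [Hy1|Hy1].
    + assert (Eyy : y' = y) by (apply Hy'; auto).
      set (s3 := Rmin s2 1).
      assert (Hs3 : si <= s3 <= s2 /\ s3 <= 1) by (unfold s3, Rmin; destruct (Rle_dec s2 1); lra).
      assert (y' + 1/2 * (s2 ^ 2 - si ^ 2) <= y).
      { apply (cv_le_ev (fun M => Sp aI si M + 1/2 * (s2 ^ 2 - si ^ 2)) (Sp aT sk) _ _ 2); auto.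
        apply cv_plus_c; auto. intros M HM.
        pose proof (Sp_gap2 aT aTp s3 sk M ltac:(lra) HM).
        pose proof (Hcmp s3 M ltac:(lra)).
        pose proof (Sp_gap2 aI aIp si s3 M ltac:(lra) HM).
        assert (0 <= sk ^ 2 - s3 ^ 2) by nra. assert (0 <= s3 ^ 2 - si ^ 2) by nra.
        assert (s2 ^ 2 <= sk ^ 2) by nra.
        assert (1/2 * (sk ^ 2 - s3 ^ 2) <= aT 2%nat * (sk ^ 2 - s3 ^ 2)) by nra.
        assert (1/2 * (s3 ^ 2 - si ^ 2) <= aI 2%nat * (s3 ^ 2 - si ^ 2)) by nra.
        lra. }
      assert (0 < s2 ^ 2 - si ^ 2) by nra. lra.
    + assert (Esi : si = 1).
      { destruct (Req_dec si 1) as [|Hne]; auto. exfalso.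
        assert (H1 : Un_cv (Sp aI 1) 1) by (apply (cv_1 aI qI); [apply aa_0|apply aa_S|apply qq_0|apply qI_cv0]).
        assert (y' + 1/2 * (1 - si ^ 2) <= 1).
        { apply (cv_le_ev (fun M => Sp aI si M + 1/2 * (1 - si ^ 2)) (Sp aI 1) _ _ 2); auto.
          apply cv_plus_c; auto. intros n Hn0. pose proof (Sp_gap2 aI aIp si 1 n ltac:(lra) Hn0).
          assert (1 ^ 2 = 1) by ring. assert (0 <= 1 - si ^ 2) by nra. nra. }
        assert (0 < 1 - si ^ 2) by nra. assert (y' = 1) by (apply Hy'; lra). lra. }
      assert (Hske : exp eps <= sk) by (unfold s2 in Hsk2; rewrite Esi in Hsk2; lra).
      set (r := cT T). set (sg := sT T).
      assert (Hr : exp (- eps) < r).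
      { unfold r, cT. assert (HPT : 0 < PI / INR T) by (apply Rdiv_lt_0_compat; lra).
        specialize (Hcos (PI / INR T)). simpl in Hcos. unfold R_dist in Hcos.
        assert (Rabs (cos (PI / INR T) - cos 0) < 1 - exp (- eps)).
        { apply Hcos. split. split; [exact I|]. intro Heq; lra. rewrite Rminus_0_r, Rabs_pos_eq; lra. }
        rewrite cos_0 in H0. apply Rabs_def2 in H0. lra. }
      assert (Hsr : 1 < sk * r).
      { assert (exp eps * exp (- eps) = 1) by (rewrite <- exp_plus, Rplus_opp_r, exp_0; auto).
        assert (0 <= r) by lra. nra. }
      assert (Hsg : 0 < sg) by (apply sT_pos; auto).
      assert (Hsk1 : 1 <= sk) by lra.
      assert (Hj : forall i, sg * (sk * r) ^ i <= y).
      { intros i.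
        assert (sk ^ S (S i) * (qT (S i) - 0) <= y).
        { apply (cv_le_ev (fun M => sk ^ S (S i) * (qT (S i) - qT M)) (Sp aT sk) _ _ (S i)); auto.
          - apply CV_mult; [apply cv_const|]. apply CV_minus; [apply cv_const|apply qT_cv0; auto].
          - intros M HM. apply (tail_lb aT qT aTp (aa_S _)); auto. }
        rewrite Rminus_0_r in H0. pose proof (qT_lower T HT2 i). fold qT sg r in H1.
        rewrite Rpow_mult_distr.
        assert (sk ^ i <= sk ^ S (S i)) by (apply Rle_pow; auto).
        assert (0 <= r ^ i) by (apply pow_le; lra). assert (0 <= sk ^ i) by (apply pow_le; lra).
        assert (0 <= sg * r ^ i) by (apply Rmult_le_pos; lra).
        nra. }
      destruct (Pow_x_infinity (sk * r) ltac:(rewrite Rabs_pos_eq; lra) ((y + 1) / sg)) as [i Hi].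
      specialize (Hi i (le_n _)). rewrite Rabs_pos_eq in Hi by (apply pow_le; lra).
      specialize (Hj i). 
      assert (sg * ((y + 1) / sg) <= sg * (sk * r) ^ i) by (apply Rmult_le_compat_l; lra).
      replace (sg * ((y + 1) / sg)) with (y + 1) in H0 by (field; lra). lra.
Qed.
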